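(* Consider the networked $SIRS$-$V_o$ system without media actuator described in the context, and assume the opinion graph (with adjacency matrix $A$) is strongly connected. At any healthy state equilibrium (an equilibrium with $x^*=0_n$), the opinions reach consensus at $o_i^*=0$ for all $i\in[n]$.
   Context: There are $n$ nodes. All parameters are real and nonnegative: $a_{ij},\beta_{ij},\gamma_i,\omega_i,\delta_i,\eta^{\min}_{ij},\Delta\eta_{ij}$. $A=[a_{ij}]$ is the weighted adjacency matrix of the directed opinion graph (edge $j\to i$ iff $a_{ij}>0$). Let $B=[\beta_{ij}]$, $H_{\min}=[\eta^{\min}_{ij}]$, $\Delta H=[\Delta\eta_{ij}]$; for a square matrix $M$, $k_i[M]=\sum_jM_{ij}$, $\widetilde K[M]=\mathrm{diag}(k_i[M])$, $L[M]=\widetilde K[M]-M$; $\widetilde G=\mathrm{diag}(\gamma_i)$, $\widetilde W=\mathrm{diag}(\omega_i)$, $\widetilde D=\mathrm{diag}(\delta_i)$, $H(o)=\mathrm{diag}(o)\Delta H+H_{\min}$. State $(o,s,x,r,v)$ with $\widetilde S=\mathrm{diag}(s)$, $\widetilde R=\mathrm{diag}(r)$, dynamics $\dot o=A(x-o)-2L[A]o$, $\dot s=\widetilde Dv-\widetilde S(Bx+H(o)v)+\widetilde Wr$, $\dot x=\widetilde SBx-\widetilde Gx$, $\dot r=\widetilde Gx-\widetilde Wr-\widetilde RH(o)v$, $\dot v=(\widetilde S+\widetilde R)H(o)v-\widetilde Dv$. A healthy state equilibrium is an equilibrium with $x^*=0_n$. *)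

(* Defs.v *)
From mathcomp Require Import all_boot all_order all_algebra.
Set Implicit Arguments. Unset Strict Implicit. Unset Printing Implicit Defensive.
Import Order.TTheory GRing.Theory Num.Theory.
Local Open Scope ring_scope.

Section SIRSVo.
Variables (R : realFieldType) (n : nat).

Definition kdeg (M : 'M[R]_n) (i : 'I_n) : R := \sum_(j < n) M i j.
Definition Ktil (M : 'M[R]_n) : 'M[R]_n := diag_mx (\row_i kdeg M i).
Definition Lap (M : 'M[R]_n) : 'M[R]_n := Ktil M - M.

Definition diagc (u : 'cV[R]_n) : 'M[R]_n := diag_mx u^T.

Definition Hmat (DH Hmin : 'M[R]_n) (o : 'cV[R]_n) : 'M[R]_n :=
  diagc o *m DH + Hmin.

Definition f_o (A : 'M[R]_n) (o x : 'cV[R]_n) : 'cV[R]_n :=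
  A *m (x - o) - 2%:R *: (Lap A *m o).
Definition f_s (B DH Hmin : 'M[R]_n) (gam om del : 'cV[R]_n)
    (o s x r v : 'cV[R]_n) : 'cV[R]_n :=
  diagc del *m v - diagc s *m (B *m x + Hmat DH Hmin o *m v) + diagc om *m r.
Definition f_x (B : 'M[R]_n) (gam : 'cV[R]_n) (s x : 'cV[R]_n) : 'cV[R]_n :=
  diagc s *m B *m x - diagc gam *m x.
Definition f_r (DH Hmin : 'M[R]_n) (gam om : 'cV[R]_n)
    (o x r v : 'cV[R]_n) : 'cV[R]_n :=
  diagc gam *m x - diagc om *m r - diagc r *m (Hmat DH Hmin o *m v).
Definition f_v (DH Hmin : 'M[R]_n) (del : 'cV[R]_n)
    (o s r v : 'cV[R]_n) : 'cV[R]_n :=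
  (diagc s + diagc r) *m (Hmat DH Hmin o *m v) - diagc del *m v.

Definition is_equilibrium (A B DH Hmin : 'M[R]_n) (gam om del : 'cV[R]_n)
    (o s x r v : 'cV[R]_n) : Prop :=
  [/\ f_o A o x = 0,
      f_s B DH Hmin gam om del o s x r v = 0,
      f_x B gam s x = 0,
      f_r DH Hmin gam om o x r v = 0 &
      f_v DH Hmin del o s r v = 0].

Definition is_healthy_equilibrium A B DH Hmin gam om del (o s x r v : 'cV[R]_n) :=
  is_equilibrium A B DH Hmin gam om del o s x r v /\ x = 0.

Definition opinion_edge (A : 'M[R]_n) : rel 'I_n := fun j i => 0 < A i j.

Definition strongly_connected (A : 'M[R]_n) : Prop :=
  forall i j : 'I_n, connect (opinion_edge A) i j.

Definition nonneg_mx (M : 'M[R]_n) : Prop := forall i j, 0 <= M i j.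
Definition nonneg_cv (u : 'cV[R]_n) : Prop := forall i, 0 <= u i 0.

End SIRSVo.

(* Main.v *)
Require Import Defs.
From mathcomp Require Import all_boot all_order all_algebra.
From mathcomp Require Import lra.
Import Order.TTheory GRing.Theory Num.Theory.
Local Open Scope ring_scope.

Theorem lemma4 (R : realFieldType) (n : nat)
  (A B Hmin DH : 'M[R]_n) (gam om del : 'cV[R]_n)
  (hA : nonneg_mx A) (hB : nonneg_mx B) (hHmin : nonneg_mx Hmin)
  (hDH : nonneg_mx DH) (hgam : nonneg_cv gam) (hom : nonneg_cv om)
  (hdel : nonneg_cv del)
  (hn : (1 < n)%N) (hsc : strongly_connected A)
  (o s x r v : 'cV[R]_n) :
  is_healthy_equilibrium A B DH Hmin gam om del o s x r v ->
  forall i : 'I_n, o i 0 = 0.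
Proof.
move=> [[Ho _ _ _ _] x0]; subst x.
have key : forall i, \sum_j A i j * o j 0 = 2%:R * kdeg A i * o i 0.
  move=> i; have /matrixP /(_ i 0) := Ho.
  rewrite /f_o /Lap /Ktil mulmxBl mul_diag_mx sub0r mulmxN.
  rewrite !mxE => h; lra.
have kpos : forall i, 0 < kdeg A i.
  move=> i.
  have [j hji] : exists j : 'I_n, j != i.
    case: (i =P Ordinal hn) => [->|ne].
      by exists (Ordinal (ltn_trans (ltnSn 0) hn)).
    by exists (Ordinal hn); apply/eqP => h; apply: ne.
  have := hsc j i => /connectP [p pth ilast].
  case/lastP: p pth ilast => [|p y] pth ilast.
    by move: hji; rewrite /= ilast eqxx.
  move: pth; rewrite rcons_path => /andP [_ e].
  rewrite last_rcons in ilast; subst y.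
  rewrite /kdeg (bigD1 (last j p)) //=.
  apply: (lt_le_trans e); rewrite lerDl; apply: sumr_ge0 => k _; exact: hA.
have i0 : 'I_n := Ordinal (ltnW hn).
case: (@arg_maxP _ _ _ i0 xpredT (fun j => `|o j 0|) isT) => m _ hm.
have hM : `|o m 0| <= 0.
  have k := kpos m.
  have h1 : `|2%:R * kdeg A m * o m 0| <= kdeg A m * `|o m 0|.
    rewrite -key; apply: (le_trans (ler_norm_sum _ _ _)).
    rewrite /kdeg big_distrl /=; apply: ler_sum => j _.
    rewrite normrM ger0_norm ?hA //; apply: ler_wpM2l; [exact: hA|exact: hm].
  rewrite !normrM (ger0_norm (ltW k)) (ger0_norm (ler0n _ 2)) in h1.
  have h2 : 0 <= `|o m 0| by [].
  nra.
move=> i; apply/eqP; rewrite -normr_le0; exact: le_trans (hm i isT) hM.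
Qed.
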